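(* For all integers $n\geq 0$, $i\geq 1$ and $\alpha\geq 0$, $\bar a_{2i}\big(2^\alpha(4n+3)\big)\equiv 0 \pmod 4$.
   Context: For an integer $k\geq 1$ let $f_k:=\prod_{n\geq 1}(1-q^{kn})$. For an integer $c\geq1$, the generalized overcubic partition function $\bar a_c(n)$ is defined by the generating function $\sum_{n\geq 0}\bar a_c(n)q^n=\dfrac{f_4^{c-1}}{f_1^2f_2^{2c-3}}$. *)

(* Defs.v *)
(* Formal power series in q are represented through
   truncations: the coefficient of q^N of a product of series with
   nonnegative exponents only depends on terms of degree <= N. *)
From mathcomp Require Import all_boot all_order all_algebra.
Set Implicit Arguments. Unset Strict Implicit. Unset Printing Implicit Defensive.
Import Order.TTheory GRing.Theory Num.Theory.
Local Open Scope ring_scope.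

(* truncation (degree <= N) of 1/(1 - q^m) = sum_j q^(m j), for m >= 1 *)
Definition geom_trunc (m N : nat) : {poly int} :=
  \sum_(j < N.+1) 'X^(m * j).

(* truncation-compatible representative of (1 - q^m)^e, e an integer *)
Definition factor_pow (m : nat) (e : int) (N : nat) : {poly int} :=
  match e with
  | Posz k => (1 - 'X^m) ^+ k
  | Negz k => (geom_trunc m N) ^+ k.+1
  end.

(* representative, correct up to degree N, of f_k^e = prod_{n>=1} (1-q^{kn})^e
   (factors with n > N are congruent to 1 mod q^(N+1) since k >= 1) *)
Definition f_pow_trunc (k : nat) (e : int) (N : nat) : {poly int} :=
  \prod_(1 <= n < N.+1) factor_pow (k * n) e N.

(* generalized overcubic partition function:
   sum_n abar c n q^n = f_4^(c-1) / (f_1^2 f_2^(2c-3)) *)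
Definition abar (c n : nat) : int :=
  (f_pow_trunc 4 (c%:Z - 1) n * f_pow_trunc 1 (-2) n
     * f_pow_trunc 2 (- (2 * c%:Z - 3)) n)`_n.

(* Main.v *)
Set Warnings "-notation-overridden -ambiguous-paths".
Require Import Defs.
From mathcomp Require Import all_boot all_order all_algebra.
From mathcomp Require Import ring lra zify.
Import GRing.Theory.

Lemma sum_bool_count (r : seq nat) (P : pred nat) :
  \sum_(i <- r) nat_of_bool (P i) = count P r.
Proof. by rewrite -sum1_count [RHS]big_mkcond; apply: eq_bigr => i _; case: (P i). Qed.

Lemma mod4_key r t : r < 4 -> t < 4 -> odd r -> odd t -> (r * t) %% 4 = 3 ->
  (t == 3) = (r == 1).
Proof. by case: r => [|[|[|[|r]]]] //; case: t => [|[|[|[|t]]]]. Qed.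

Lemma odd_mod4 d : odd d -> (d %% 4 == 3) || (d %% 4 == 1).
Proof.
move=> hd; have : odd (d %% 4) by rewrite odd_mod.
have : d %% 4 < 4 by rewrite ltn_mod.
by case: (d %% 4) => [|[|[|[|r]]]].
Qed.

Lemma divn_divK {d M} : d %| M -> 0 < M -> M %/ (M %/ d) = d.
Proof. by move=> hd hM; rewrite divnA // mulKn. Qed.

Lemma invol_even M s : M %% 4 = 3 -> uniq s -> (forall d, (d \in s) = (d %| M)) ->
  ~~ odd (size s).
Proof.
move=> hM us hs.
have M0 : 0 < M by rewrite lt0n; apply/eqP => M00; move: hM; rewrite M00.
have Modd : odd M by rewrite -(odd_mod M (d := 4)) // hM.
have key : forall d, d %| M -> (M %/ d %% 4 == 3) = (d %% 4 == 1).
  move=> d hd.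
  have hd0 : 0 < d by case: d hd => //; rewrite dvd0n => /eqP M00; rewrite M00 in M0.
  have hdod : odd d := dvdn_odd hd Modd.
  have he : M %/ d %| M by apply/dvdnP; exists d; rewrite mulnC divnK.
  have heod : odd (M %/ d) := dvdn_odd he Modd.
  apply: mod4_key; rewrite ?ltn_mod ?odd_mod //.
  by rewrite modnMm mulnC divnK.
have perm : perm_eq s (map (divn M) s).
  apply: uniq_perm => //.
    rewrite map_inj_in_uniq // => x y; rewrite !hs => hx hy e.
    by rewrite -(divn_divK hx M0) e divn_divK.
  move=> x; rewrite hs; apply/idP/mapP => [hx|[y]].
    exists (M %/ x); last by rewrite divn_divK.
    by rewrite hs; apply/dvdnP; exists x; rewrite mulnC divnK.
  by rewrite hs => hy ->; apply/dvdnP; exists y; rewrite mulnC divnK.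
have c1 : count (fun d => d %% 4 == 3) s = count (fun d => d %% 4 == 1) s.
  rewrite (permP perm) count_map; apply: eq_in_count => d; rewrite hs => hd /=.
  exact: key.
have c2 : count (predC (fun d => d %% 4 == 3)) s = count (fun d => d %% 4 == 1) s.
  apply: eq_in_count => d; rewrite hs => hd /=.
  have := odd_mod4 d (dvdn_odd hd Modd).
  by case/orP => /eqP ->.
by rewrite -(count_predC (fun d => d %% 4 == 3)) c1 c2 addnn odd_double.
Qed.

Lemma inner_sum N d : 0 < N -> 0 < d ->
  \sum_(1 <= n < N.+1) nat_of_bool (n * d == N) = nat_of_bool (d %| N).
Proof.
move=> hN hd; rewrite sum_bool_count.
case: (boolP (d %| N)) => hdiv.
  have -> : count (fun n => n * d == N) (index_iota 1 N.+1) =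
            count (pred1 (N %/ d)) (index_iota 1 N.+1).
    apply: eq_count => n /=; apply/eqP/eqP => [<-|->]; first by rewrite mulnK.
    by rewrite divnK.
  rewrite count_uniq_mem; last exact: iota_uniq.
  rewrite mem_index_iota ltnS leq_div andbT divn_gt0 //.
  by rewrite (dvdn_leq hN hdiv).
rewrite (@eq_count _ _ pred0); first by rewrite count_pred0.
move=> n /=; apply/negbTE.
by apply: contra hdiv => /eqP <-; exact: dvdn_mull.
Qed.

Lemma coef_count_even a M : M %% 4 = 3 ->
  ~~ odd (\sum_(1 <= n < (2 ^ a * M).+1) \sum_(j < (2 ^ a * M).+1)
            nat_of_bool (n + 2 * n * j == 2 ^ a * M)).
Proof.
move=> hM; set N := 2 ^ a * M.
have M0 : 0 < M by rewrite lt0n; apply/eqP => M00; move: hM; rewrite M00.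
have Modd : odd M by rewrite -(odd_mod M (d := 4)) // hM.
have N0 : 0 < N by rewrite muln_gt0 expn_gt0 M0.
have MN : M <= N by rewrite /N leq_pmull // expn_gt0.
rewrite exchange_big /=.
rewrite (eq_bigr (fun j : 'I_N.+1 => nat_of_bool ((2 * j + 1) %| N))); last first.
  move=> j _; rewrite -(@inner_sum N (2 * j + 1) N0) ?addn1 //.
  apply: eq_bigr => n _; congr (nat_of_bool (_ == _)).
  by rewrite mulnS mulnA (mulnC n 2).
rewrite -(big_mkord xpredT (fun j => nat_of_bool ((2 * j + 1) %| N))).
rewrite /index_iota subn0 sum_bool_count.
rewrite -[count _ _](count_map (fun j => 2 * j + 1) (fun d => d %| N)) -size_filter.

apply: (invol_even _ _ hM).
  rewrite filter_uniq // map_inj_uniq ?iota_uniq // => x y; lia.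
move=> d; rewrite mem_filter; apply/andP/idP => [[h1 /mapP [j _ ej]] | h].
  rewrite ej in h1 *; move: h1; rewrite /N Gauss_dvdr // coprimeXr // coprimen2.
  by rewrite oddD oddM.
split; first by rewrite /N dvdn_mull.
apply/mapP; exists d./2; last first.
  have := odd_double_half d; rewrite (dvdn_odd h Modd) -muln2; lia.
rewrite mem_iota /= add0n ltnS; have := dvdn_leq M0 h; have := odd_double_half d; rewrite -muln2; lia.
Qed.

Local Open Scope ring_scope.

Section Cong.
Variable N : nat.

Definition inI (p : {poly int}) :=
  exists r s : {poly int}, p = 4 * r + 'X^(N.+1) * s.
Definition cong (p q : {poly int}) := inI (p - q).

Lemma inI4 r : inI (4 * r). Proof. by exists r, 0; rewrite mulr0 addr0. Qed.
Lemma inIX s : inI ('X^(N.+1) * s). Proof. by exists 0, s; rewrite mulr0 add0r. Qed.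
Lemma inID {p q} : inI p -> inI q -> inI (p + q).
Proof. move=> [r1 [s1 ->]] [r2 [s2 ->]]; exists (r1 + r2), (s1 + s2); ring. Qed.
Lemma inIM q {p} : inI p -> inI (q * p).
Proof. move=> [r1 [s1 ->]]; exists (q * r1), (q * s1); ring. Qed.

Lemma cong_refl p : cong p p. Proof. by rewrite /cong subrr; exists 0, 0; rewrite !mulr0 addr0. Qed.
Lemma cong_eq p q : p = q -> cong p q. Proof. by move=> ->; apply: cong_refl. Qed.
Lemma cong_sym p q : cong p q -> cong q p.
Proof. move=> h; rewrite /cong -opprB -mulN1r; exact: inIM. Qed.
Lemma cong_trans q p r : cong p q -> cong q r -> cong p r.
Proof. move=> h1 h2; have := inID h1 h2; rewrite /cong. by have -> : p - q + (q - r) = p - r by ring. Qed.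
Arguments cong_trans {q p r}.
Lemma cong_step {p p1 q1 r} : p = p1 -> cong p1 q1 -> cong q1 r -> cong p r.
Proof. by move=> -> h1 h2; apply: cong_trans h1 h2. Qed.
Lemma congD p q p' q' : cong p p' -> cong q q' -> cong (p + q) (p' + q').
Proof. move=> h1 h2; have := inID h1 h2; rewrite /cong. by have -> : p - p' + (q - q') = p + q - (p' + q') by ring. Qed.
Lemma congM p q p' q' : cong p p' -> cong q q' -> cong (p * q) (p' * q').
Proof.
move=> h1 h2; have := inID (inIM q h1) (inIM p' h2); rewrite /cong.
by have -> : q * (p - p') + p' * (q - q') = p * q - p' * q' by ring.
Qed.
Lemma congX p q k : cong p q -> cong (p ^+ k) (q ^+ k).
Proof. move=> h; elim: k => [|k IH]; first exact: cong_refl. rewrite !exprS; exact: congM. Qed.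
Lemma cong4 p q r : p = q + 4 * r -> cong p q.
Proof. move=> ->; rewrite /cong; have -> : q + 4 * r - q = 4 * r by ring. exact: inI4. Qed.

Lemma geom_mul m : (1 - 'X^m) * geom_trunc m N = 1 - 'X^(m * N.+1).
Proof.
rewrite /geom_trunc; elim: N => [|K IH].
  by rewrite big_ord_recr big_ord0 /= add0r muln0 muln1 expr0 mulr1.
rewrite big_ord_recr /= mulrDr IH mulrBl mul1r -exprD.
have -> : (m + m * K.+1 = m * K.+2)%N by rewrite (mulnS m K.+1).
ring.
Qed.

Lemma geom_cong m : (0 < m)%N -> cong ((1 - 'X^m) * geom_trunc m N) 1.
Proof.
move=> hm; rewrite geom_mul /cong.
have -> : (m * N.+1 = N.+1 + (m * N.+1 - N.+1))%N by rewrite subnKC // leq_pmull.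
rewrite exprD; have -> : 1 - 'X^(N.+1) * 'X^(m * N.+1 - N.+1) - 1 = 'X^(N.+1) * (- 'X^(m * N.+1 - N.+1)) :> {poly int} by ring.
exact: inIX.
Qed.

Lemma factor_cong m k : (0 < m)%N ->
  cong ((1 - 'X^(4 * m)) ^+ (2 * k + 1) * geom_trunc (1 * m) N ^+ 2 * geom_trunc (2 * m) N ^+ (4 * k + 1))
       (1 + 2 * ('X^m * geom_trunc (2 * m) N)).
Proof.
move=> hm.
have e1 : cong ((1 - 'X^m) * geom_trunc m N) 1 := geom_cong m hm.
have e2 := geom_cong (2 * m) ltac:(by rewrite muln_gt0).
rewrite mul1n; set g1 := geom_trunc m N; set g2 := geom_trunc (2 * m) N.
rewrite -/g2 in e2; rewrite -/g1 in e1.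
rewrite (mulnC 4) (mulnC 2) exprM in e2 *; rewrite exprM.
set x := 'X^m; rewrite -/x in e1 e2 *.
have e4 : cong ((1 - x^+4)^+2) ((1 - x^+2)^+4).
  by apply: (cong4 _ _ (x^+2 - 2 * x^+4 + x^+6)); ring.
have s1 : cong ((1 - x ^+ 4) ^+ (2 * k + 1) * g1 ^+ 2 * g2 ^+ (4 * k + 1))
   (((1 - x^+2)^+4)^+k * (1 - x^+4) * g1 ^+ 2 * ((g2^+4)^+k * g2)).
  rewrite exprD expr1 exprM (exprD g2) expr1 (exprM g2).
  apply: congM; last exact: cong_refl.
  apply: congM; last exact: cong_refl.
  apply: congM; last exact: cong_refl.
  exact: congX.
apply: (cong_trans s1).
have s2 : cong (((1 - x^+2)^+4)^+k * (g2^+4)^+k * ((1 - x^+2) * g2) * ((1 + x^+2) * g1^+2))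
                ((1^+4)^+k * 1 * ((1 + x^+2) * g1^+2)).
  rewrite -[_ ^+ k * _ ^+ k]exprMn -exprMn.
  apply: congM; last exact: cong_refl.
  apply: congM; [apply: congX; apply: congX; exact: e2 | exact: e2].
apply: (cong_step _ s2); first ring.
rewrite !expr1n !mul1r.
have s3 : cong (((1 - x) * g1)^+2 + 2 * x * g1^+2) (1^+2 + 2 * x * g1^+2).
  apply: congD; [exact: congX | exact: cong_refl].
apply: (cong_step _ s3); first ring.
rewrite expr1n mulrA.
apply: congD; first exact: cong_refl.
have s4 : cong (2 * x * g1^+2 * 1) (2 * x * g1^+2 * ((1 - x^+2) * g2)).
  apply: congM; [exact: cong_refl | exact: cong_sym].
apply: (cong_step _ s4); first ring.
have s5 : cong (2 * x * g2 * ((1 - x) * g1)^+2) (2 * x * g2 * 1^+2).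
  apply: congM; [exact: cong_refl | exact: congX].
apply: (cong_trans (q := 2 * x * g2 * ((1 - x) * g1)^+2)); last first.
  by apply: (cong_step _ s5); [ring | rewrite expr1n mulr1; exact: cong_refl].
apply: (cong4 _ _ (x * g1^+2 * g2 * (x - x^+2))); ring.
Qed.
End Cong.

Lemma prod_cong N lo hi (F G : nat -> {poly int}) :
  (forall n, (lo <= n < hi)%N -> cong N (F n) (G n)) ->
  cong N (\prod_(lo <= n < hi) F n) (\prod_(lo <= n < hi) G n).
Proof.
move=> h; rewrite (big_nat_cond _ _ _ _ _ F) (big_nat_cond _ _ _ _ _ G).
apply: (big_ind2 (cong N)); first exact: cong_refl.
  by move=> x1 x2 y1 y2; apply: congM.
by move=> n /andP [hn _]; apply: h.
Qed.


Lemma prod_lin N lo hi (a : nat -> {poly int}) :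
  cong N (\prod_(lo <= n < hi) (1 + 2 * a n)) (1 + 2 * \sum_(lo <= n < hi) a n).
Proof.
apply: (big_ind2 (fun p s => cong N p (1 + 2 * s))).
- by apply: cong_eq; rewrite mulr0 addr0.
- move=> x1 x2 y1 y2 h1 h2; apply: (cong_trans N _ _ _ (congM N _ _ _ _ h1 h2)).
  by apply: (cong4 N _ _ (x2 * y2)); ring.
- by move=> n _; apply: cong_refl.
Qed.

Theorem theorem1p6 (n i alpha : nat) :
  (1 <= i)%N -> (4 %| abar (2 * i) (2 ^ alpha * (4 * n + 3)))%Z.
Proof.
case: i => [//|k] _.
set N := (2 ^ alpha * (4 * n + 3))%N.
have E1 : ((2 * k.+1)%N%:Z - 1) = Posz (2 * k + 1) by lia.
have E2 : (-2 : int) = Negz 1 by [].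
have E3 : - (2 * (2 * k.+1)%N%:Z - 3) = Negz (4 * k) by rewrite NegzE; lia.
rewrite /abar E1 E2 E3 /f_pow_trunc -!big_split /=.
have H : cong N (\prod_(1 <= i < N.+1)
          ((1 - 'X^(4 * i)) ^+ (2 * k + 1) * geom_trunc (1 * i) N ^+ 2 *
           geom_trunc (2 * i) N ^+ (4 * k).+1))
     (1 + 2 * \sum_(1 <= i < N.+1) ('X^i * geom_trunc (2 * i) N)).
  apply: (cong_trans N _ _ _ _ (prod_lin N 1 N.+1 (fun i => 'X^i * geom_trunc (2 * i) N))).
  apply: prod_cong => i /andP [hi _]; rewrite -[(4 * k).+1]addn1; exact: (factor_cong N i k hi).
case: H => r [s]; move/eqP; rewrite subr_eq => /eqP ->.
rewrite !coefD coefXnM ltnSn coef1. rewrite !mulr_natl !coefMn coef_sum.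
under eq_bigr => i _ do rewrite /geom_trunc mulr_sumr coef_sum.
under eq_bigr => i _ do under eq_bigr => j _ do rewrite -exprD coefXn.
have -> : \sum_(1 <= i < N.+1) \sum_(j < N.+1) ((N == i + 2 * i * j)%:R : int) =
    (\sum_(1 <= i < N.+1) \sum_(j < N.+1) nat_of_bool (i + 2 * i * j == N))%:R.
  rewrite natr_sum; apply: eq_bigr => i _; rewrite natr_sum; apply: eq_bigr => j _.
  by rewrite eq_sym.
have := @coef_count_even alpha (4 * n + 3) ltac:(by rewrite -modnDm modnMr).
rewrite -/N; set c := (\sum_(1 <= i < N.+1) _)%N => hc.
have {}hc : c = (c./2).*2.
  by have := odd_double_half c; rewrite (negbTE hc) add0n.
have N0 : (N == 0)%N = false by rewrite /N muln_eq0 expn_eq0 addn3.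
rewrite N0 hc; move: (r`_N) (c./2) => x y.
apply/dvdzP; exists (x + y%:R).
rewrite -[y.*2]muln2 natrM -(mulr_natr x 4) -(mulr_natr (_ * _) 2) /=; ring.
Qed.
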